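(* For every integer $m\geq 1$, let \[F_m(q)=1+\sum_{k=1}^{m-1}(-1)^k\prod_{i=0}^{k-1}\left(\frac{1}{q^{m-1-i}}-1\right).\] Then, as formal Laurent series in $q$, \[\sum_{n=1}^{\infty}a_m(n)q^n=\frac{F_m(q)}{(q;q)_\infty}-\mathcal{D}_m,\] where $\mathcal{D}_m$ is the sum of the terms with exponent of $q$ less than or equal to $0$ in the Laurent expansion of $F_m(q)/(q;q)_\infty$.
   Context: $a_m(n)$ is the number of partitions of $n$ in which the smallest part occurs at least $m$ times. $(a;q)_\infty=\prod_{i\geq 0}(1-aq^i)$, so $1/(q;q)_\infty=\sum_{n\geq0}p(n)q^n$ with $p(n)$ the number of partitions of $n$. Empty sums are $0$ and empty products are $1$. *)

(* Defs.v *)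
From HB Require Import structures.
From mathcomp Require Import all_boot all_order all_algebra fraction.
Set Implicit Arguments. Unset Strict Implicit. Unset Printing Implicit Defensive.
Import Order.TTheory GRing.Theory Num.Theory.
Local Open Scope ring_scope.

(* Partitions of n, encoded by multiplicities: f i = number of parts equal
   to i+1 (each multiplicity is necessarily <= n). *)
Definition is_partition (n : nat) (f : {ffun 'I_n -> 'I_n.+1}) : bool :=
  (\sum_(i < n) (i.+1 * f i))%N == n.

Definition npart (n : nat) : nat := #|[set f : {ffun 'I_n -> 'I_n.+1} | is_partition f]|.

Definition smallest_ge (m n : nat) (f : {ffun 'I_n -> 'I_n.+1}) : bool :=
  [exists i : 'I_n, (m <= f i)%N && [forall j : 'I_n, (j < i)%N ==> (f j == ord0)]].

Definition a_m (m n : nat) : nat :=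
  #|[set f : {ffun 'I_n -> 'I_n.+1} | is_partition f && smallest_ge m f]|.

Definition Fq := {fraction {poly int}}.
Definition toF (p : {poly int}) : Fq := @FracField.tofrac _ p.
Definition qF : Fq := toF 'X.
Definition F_m (m : nat) : Fq :=
  1 + \sum_(1 <= k < m) (-1) ^+ k *
        \prod_(0 <= i < k) (qF ^- (m - 1 - i) - 1).

Definition pZ (n : int) : int := if (0 <= n) then (npart `|n|%N)%:Z else 0.

(* Coefficient of q^n (n : int) in the Laurent expansion of
   (P(q) / q^D) / (q;q)_oo = q^-D P(q) * sum_k p(k) q^k. *)
Definition laurent_coef (D : nat) (P : {poly int}) (n : int) : int :=
  \sum_(j < size P) P`_j * pZ (n + D%:Z - j%:Z).

Definition Dm_coef (D : nat) (P : {poly int}) (n : int) : int :=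
  if n <= 0 then laurent_coef D P n else 0.

Definition lhs_coef (m : nat) (n : int) : int :=
  if 1 <= n then (a_m m `|n|%N)%:Z else 0.

(* Main.v *)
Require Import Defs.
From HB Require Import structures.
From mathcomp Require Import all_boot all_order all_algebra fraction.
From mathcomp Require Import zify ring lra.
From Stdlib Require Import FunctionalExtensionality.
Import Order.TTheory GRing.Theory Num.Theory.
Local Open Scope ring_scope.
Set Implicit Arguments. Unset Strict Implicit. Unset Printing Implicit Defensive.
Section Comb.
Local Open Scope nat_scope.

Definition fn K (f : {ffun 'I_K -> 'I_K.+1}) : nat -> nat :=
  fun i => oapp (fun j : 'I_K => nat_of_ord (f j)) 0 (insub i).
Definition mk K (h : nat -> nat) : {ffun 'I_K -> 'I_K.+1} := [ffun i : 'I_K => inord (h i)].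
Arguments mk {K} h.
Definition good K (h : nat -> nat) := (forall i, h i <= K) /\ (forall i, K <= i -> h i = 0).
Definition W K (h : nat -> nat) := \sum_(i < K) i.+1 * h i.

Lemma fn_ord K f (i : 'I_K) : fn f i = f i.
Proof. by rewrite /fn valK. Qed.

Lemma fn_out K f i : K <= i -> fn (K:=K) f i = 0.
Proof. by move=> Hi; rewrite /fn insubN //= -leqNgt. Qed.

Lemma fn_good K f : good K (fn (K:=K) f).
Proof.
split=> [i|i Hi]; last exact: fn_out.
rewrite /fn; case: insubP => [j _ _|_] //=; by rewrite -ltnS ltn_ord.
Qed.

Lemma mk_fn K f : mk (fn (K:=K) f) = f.
Proof. by apply/ffunP => i; rewrite ffunE fn_ord inord_val. Qed.

Lemma fn_mk K h : good K h -> fn (mk (K:=K) h) = h.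
Proof.
move=> [hb hz]; apply: functional_extensionality => i.
case: (ltnP i K) => Hi; last by rewrite fn_out // hz.
by rewrite -[i]/(nat_of_ord (Ordinal Hi)) fn_ord ffunE inordK // ltnS.
Qed.

Lemma wt_fn K (f : {ffun 'I_K -> 'I_K.+1}) : \sum_(i < K) i.+1 * f i = W K (fn f).
Proof. by apply: eq_bigr => i _; rewrite fn_ord. Qed.

Definition upd (h : nat -> nat) k v := fun i => if i == k then v else h i.

Lemma W_upd K h k v : k < K -> W K (upd h k v) + k.+1 * h k = W K h + k.+1 * v.
Proof.
move=> Hk; rewrite /W (bigD1 (Ordinal Hk)) //= [in RHS](bigD1 (Ordinal Hk)) //=.
rewrite /upd eqxx.
rewrite (eq_bigr (fun i : 'I_K => i.+1 * h i)); last first.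
  move=> i Hi; have -> : (nat_of_ord i == k) = false => //.
  by apply/negbTE; move: Hi; apply: contra => /eqP Hik; apply/eqP; apply: val_inj.
lia.
Qed.

Lemma W_widen n K h : n <= K -> (forall i, n <= i -> h i = 0) -> W K h = W n h.
Proof.
move=> nK hz; rewrite /W (@big_ord_widen _ _ _ n K (fun i => i.+1 * h i)) // [RHS]big_mkcond /=.
apply: eq_bigr => i _; case: ifP => // /negbT; rewrite -leqNgt => /hz ->.
by rewrite muln0.
Qed.

Lemma wbound K h n : W K h = n -> forall i, i < K -> i.+1 * h i <= n.
Proof. by move=> HW i Hi; rewrite -HW /W (bigD1 (Ordinal Hi)) //= leq_addr. Qed.

Lemma wb_le K h n i : good K h -> W K h = n -> h i <= n.
Proof.
move=> [_ hz] HW; case: (ltnP i K) => Hi; last by rewrite hz.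
have := wbound HW Hi; nia.
Qed.

Lemma wb_zero K h n i : good K h -> W K h = n -> n <= i -> h i = 0.
Proof.
move=> [_ hz] HW ni; case: (ltnP i K) => Hi; last by rewrite hz.
have := wbound HW Hi; nia.
Qed.

Definition sgeb K m (h : nat -> nat) :=
  [exists i : 'I_K, (m <= h i) && [forall j : 'I_K, (j < i) ==> (h j == 0)]].
Definition sgeP m (h : nat -> nat) := exists i, m <= h i /\ forall j, j < i -> h j = 0.

Lemma sgebP K m h : 0 < m -> good K h -> reflect (sgeP m h) (sgeb K m h).
Proof.
move=> m0 [hb hz]; apply: (iffP existsP) => [[i /andP[Hm /forallP Hj]]|[i [Hm Hj]]].
  exists i; split=> // j ji; have jK : j < K by exact: ltn_trans ji (ltn_ord i).
  by move: (Hj (Ordinal jK)) => /implyP /(_ ji) /eqP.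
have iK : i < K by rewrite ltnNge; apply/negP => /hz Hz; rewrite Hz in Hm; lia.
exists (Ordinal iK); rewrite Hm /=; apply/forallP => j; apply/implyP => ji.
by apply/eqP; exact: Hj.
Qed.

Lemma sge_fn n m (f : {ffun 'I_n -> 'I_n.+1}) : smallest_ge m f = sgeb n m (fn f).
Proof.
rewrite /smallest_ge /sgeb; apply: eq_existsb => i; rewrite fn_ord; congr (_ && _).
apply: eq_forallb => j; rewrite fn_ord; congr (_ ==> _).

Qed.

Lemma card_h_bij K K' (R S : (nat -> nat) -> bool) (phi psi : (nat -> nat) -> (nat -> nat)) :
  (forall h, good K h -> R h -> [/\ good K' (phi h), S (phi h) & psi (phi h) = h]) ->
  (forall h, good K' h -> S h -> [/\ good K (psi h), R (psi h) & phi (psi h) = h]) ->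
  #|[set f : {ffun 'I_K -> 'I_K.+1} | R (fn f)]| =
  #|[set g : {ffun 'I_K' -> 'I_K'.+1} | S (fn g)]|.
Proof.
move=> H1 H2.
pose F (f : {ffun 'I_K -> 'I_K.+1}) : {ffun 'I_K' -> 'I_K'.+1} := mk (phi (fn f)).
pose G (g : {ffun 'I_K' -> 'I_K'.+1}) : {ffun 'I_K -> 'I_K.+1} := mk (psi (fn g)).
have FG : {in [set f | R (fn f)], cancel F G}.
  move=> f; rewrite inE => Rf; have [g1 s1 e1] := H1 _ (fn_good f) Rf.
  by rewrite /G /F fn_mk // e1 mk_fn.
rewrite -(card_in_imset (can_in_inj FG)); apply: eq_card => g.
rewrite [in RHS]inE; apply/imsetP/idP => [[f]|Sg].
  rewrite inE => Rf ->; have [g1 s1 e1] := H1 _ (fn_good f) Rf.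
  by rewrite /F fn_mk.
have [g1 s1 e1] := H2 _ (fn_good g) Sg.
exists (G g); first by rewrite inE /G fn_mk.
by rewrite /F /G fn_mk // e1 mk_fn.
Qed.

End Comb.
Section Comb2.
Local Open Scope nat_scope.

Lemma transfer n K (Q : nat -> (nat -> nat) -> bool) :
  n <= K -> (forall h, good n h -> good K h -> W n h = n -> Q n h = Q K h) ->
  #|[set f : {ffun 'I_n -> 'I_n.+1} | (W n (fn f) == n) && Q n (fn f)]| =
  #|[set g : {ffun 'I_K -> 'I_K.+1} | (W K (fn g) == n) && Q K (fn g)]|.
Proof.
move=> nK HQ; apply: (@card_h_bij n K (fun h => (W n h == n) && Q n h) (fun h => (W K h == n) && Q K h) id id) => h gh /andP[/eqP HW Hq].
- have gK : good K h.
    case: gh => hb hz; split=> [i|i Ki]; first exact: leq_trans (hb i) nK.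
    exact: hz (leq_trans nK Ki).
  have HW' : W K h = n by rewrite (W_widen nK) //; case: gh.
  by split=> //; rewrite HW' eqxx -HQ.
- have gn : good n h by split=> i; [exact: wb_le HW | exact: wb_zero HW].
  have HW' : W n h = n by rewrite -(W_widen nK) //; case: gn.
  by split=> //; rewrite HW' eqxx HQ.
Qed.

Definition CP K n := #|[set f : {ffun 'I_K -> 'I_K.+1} | W K (fn f) == n]|.
Definition CA K n m :=
  #|[set f : {ffun 'I_K -> 'I_K.+1} | (W K (fn f) == n) && sgeb K m (fn f)]|.

Lemma npart_CP n K : n <= K -> npart n = CP K n.
Proof.
move=> nK; have E := @transfer n K (fun _ _ => true) nK (fun _ _ _ _ => erefl).
rewrite /CP /npart.
transitivity (#|[set f : {ffun 'I_n -> 'I_n.+1} | (W n (fn f) == n) && true]|).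
  by apply: eq_card => f; rewrite !inE /is_partition wt_fn andbT.
by rewrite E; apply: eq_card => f; rewrite !inE andbT.
Qed.

Lemma am_CA m n K : 0 < m -> n <= K -> a_m m n = CA K n m.
Proof.
move=> m0 nK; have := @transfer n K (fun K h => sgeb K m h) nK.
rewrite /CA /a_m => <-.
  by apply: eq_card => f; rewrite !inE /is_partition wt_fn sge_fn.
move=> h gn gK _; by apply/(sgebP m0 gn)/(sgebP m0 gK).
Qed.

Definition fz K (h : nat -> nat) := find (fun i => h i != 0) (iota 0 K).

Lemma fzE K h i : i < K -> h i != 0 -> (forall j, j < i -> h j = 0) -> fz K h = i.
Proof.
move=> iK hi hj; rewrite /fz.
have Hh : has (fun i => h i != 0) (iota 0 K).
  by apply/hasP; exists i => //; rewrite mem_iota.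
have Hf := nth_find 0 Hh.
have fK : find (fun i => h i != 0) (iota 0 K) < size (iota 0 K) by rewrite -has_find.
rewrite size_iota in fK; rewrite nth_iota // add0n in Hf.
case: (ltngtP (find (fun i => h i != 0) (iota 0 K)) i) => // c.
- by move: Hf; rewrite hj.
- by have := before_find 0 c; rewrite nth_iota // add0n hi.
Qed.

Lemma card_split (T : finType) (P Q : pred T) :
  #|[set x | P x]| = #|[set x | P x && Q x]| + #|[set x | P x && ~~ Q x]|.
Proof.
rewrite -(cardsID [set x | Q x] [set x | P x]); congr (_ + _); apply: eq_card => x;
by rewrite !inE // andbC.
Qed.

Lemma upd_eq h k v : upd h k v k = v.
Proof. by rewrite /upd eqxx. Qed.
Lemma upd_ne h k v i : i != k -> upd h k v i = h i.
Proof. by rewrite /upd => /negbTE ->. Qed.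

End Comb2.
Section Comb3.
Local Open Scope nat_scope.

Lemma CA1 K n : 0 < n -> CA K n 1 = CP K n.
Proof.
move=> n0; rewrite /CA /CP; apply: eq_card => f; rewrite !inE.
case: eqP => //= HW; apply/(sgebP (isT : 0 < 1) (fn_good f)).
set h := fn f in HW *.
have ex : exists i, 0 < h i.
  case: (pickP (fun i : 'I_K => 0 < h i)) => [i Hi|H0]; first by exists i.
  move: HW; rewrite /W big1 => [E|i _]; first by move: n0; rewrite -E.
  by have := H0 i; rewrite /= lt0n => /negbFE/eqP ->; rewrite muln0.
case: (ex_minnP ex) => i Hi Hmin; exists i; split=> // j ji.
by apply/eqP; rewrite -leqn0 leqNgt; apply/negP => /Hmin; rewrite leqNgt ji.
Qed.

Lemma bij1 n m : 0 < m ->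
  #|[set f : {ffun 'I_(n + m) -> 'I_(n + m).+1} |
     ((W (n + m) (fn f) == n + m) && sgeb (n + m) m (fn f)) && (m <= fn f 0)]|
  = CP (n + m) n.
Proof.
move=> m0; set K := n + m.
have K0 : 0 < K by rewrite /K; lia.
apply: (@card_h_bij K K (fun h => ((W K h == K) && sgeb K m h) && (m <= h 0)) (fun g => W K g == n)
   (fun h => upd h 0 (h 0 - m)) (fun g => upd g 0 (g 0 + m))).
- move=> h [hb hz] /andP[/andP[/eqP HW _] Hm].
  have gp : good K (upd h 0 (h 0 - m)).
    split=> i; case: (eqVneq i 0) => [->|ne]; rewrite ?upd_eq ?upd_ne //.
    - by rewrite (leq_trans (leq_subr _ _) (hb 0)).
    - move=> Ki; lia.
    - exact: hz.
  split=> //.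
  + have := W_upd h (h 0 - m) K0; rewrite HW => E; apply/eqP; lia.
  + apply: functional_extensionality => i.
    case: (eqVneq i 0) => [->|ne]; rewrite ?upd_eq ?upd_ne //.
    by rewrite subnK.
- move=> g gg /eqP HW.
  have g0n : g 0 <= n := wb_le 0 gg HW.
  have gp : good K (upd g 0 (g 0 + m)).
    case: gg => gb gz; split=> i; case: (eqVneq i 0) => [->|ne]; rewrite ?upd_eq ?upd_ne //.
    - rewrite /K; lia.
    - move=> Ki; lia.
    - exact: gz.
  split=> //.
  + rewrite upd_eq leq_addl andbT; apply/andP; split.
      have := W_upd g (g 0 + m) K0; rewrite HW => E; apply/eqP; lia.
    apply/(sgebP m0 gp); exists 0; split=> //; by rewrite upd_eq leq_addl.
  + apply: functional_extensionality => i.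
    case: (eqVneq i 0) => [->|ne]; rewrite ?upd_eq ?upd_ne //.
    by rewrite addnK.
Qed.

End Comb3.
Section Comb4.
Local Open Scope nat_scope.

Lemma bij2 n m : 0 < m ->
  #|[set f : {ffun 'I_(n + m) -> 'I_(n + m).+1} |
     ((W (n + m) (fn f) == n + m) && sgeb (n + m) m (fn f)) && ~~ (m <= fn f 0)]|
  = #|[set g : {ffun 'I_(n + m) -> 'I_(n + m).+1} |
     ((W (n + m) (fn g) == n) && sgeb (n + m) m (fn g)) && ~~ sgeb (n + m) m.+1 (fn g)]|.
Proof.
move=> m0; set K := n + m.
have m1 : 0 < m.+1 by [].
apply: (@card_h_bij K K (fun h => ((W K h == K) && sgeb K m h) && ~~ (m <= h 0))
   (fun g => ((W K g == n) && sgeb K m g) && ~~ sgeb K m.+1 g)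
   (fun h => upd (upd h (fz K h) (h (fz K h) - m)) (fz K h).-1 m)
   (fun g => upd (upd g (fz K g) 0) (fz K g).+1 (g (fz K g).+1 + m))).
- move=> h gh /andP[/andP[/eqP HW /(sgebP m0 gh) [i [Hm Hz]]] H0].
  have [hb hz] := gh.
  case: i Hm Hz => [|i] Hm Hz; first by rewrite Hm in H0.
  have iK : i.+1 < K.
    by rewrite ltnNge; apply/negP => /hz E; rewrite E in Hm; lia.
  have hi0 : h i.+1 != 0 by rewrite -lt0n (leq_trans m0 Hm).
  rewrite (fzE iK hi0 Hz) /=.
  have hi : h i = 0 := Hz i (ltnSn i).
  set u := upd h i.+1 (h i.+1 - m); set p := upd u i m.
  have ne : i != i.+1 by rewrite neq_ltn ltnSn.
  have pi : p i = m by rewrite /p upd_eq.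
  have pi1 : p i.+1 = h i.+1 - m by rewrite /p upd_ne 1?eq_sym // /u upd_eq.
  have pj : forall j, j != i -> j != i.+1 -> p j = h j.
    by move=> j a b; rewrite /p /u !upd_ne.
  have gp : good K p.
    split=> j.
    - case: (eqVneq j i) => [->|a]; first by rewrite pi (leq_trans Hm (hb _)).
      case: (eqVneq j i.+1) => [->|b]; first by rewrite pi1 (leq_trans (leq_subr _ _) (hb _)).
      by rewrite pj.
    - move=> Kj; rewrite pj ?hz //; apply/eqP => E; rewrite E in Kj; lia.
  split=> //.
  + rewrite andbC; apply/andP; split.
      apply/negP => /(sgebP m1 gp) [i2 [H1 H2]].
      case: (ltngtP i2 i) => c.
      * by rewrite pj ?Hz ?(ltn_trans c) // in H1; rewrite ?neq_ltn ?c ?(ltn_trans c) //.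
      * by move: (H2 i c); rewrite pi; lia.
      * by rewrite c pi in H1; lia.
    apply/andP; split.
      have E1 := W_upd h (h i.+1 - m) iK.
      have E2 := W_upd u m (ltnW iK).
      have ui : u i = 0 by rewrite /u upd_ne.
      rewrite ui HW in E1 E2 *; rewrite -/p in E2; rewrite -/u in E1.
      have HK : K = n + m by [].
      move: (h i.+1) Hm E1 E2 HK => x Hx E1 E2 HK.
      rewrite -(subnKC Hx) in E1; move: (x - m) E1 => d E1.
      apply/eqP; move: (W K u) (W K p) E1 E2 => a b E1 E2.
      rewrite addKn /K in E1; nia.
    apply/(sgebP m0 gp); exists i; split; first by rewrite pi.
    move=> j ji; rewrite pj ?Hz //; first exact: ltn_trans ji _.
    + by rewrite neq_ltn ji.
    + by rewrite neq_ltn (ltn_trans ji).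
  + have fp : fz K p = i.
      apply: fzE; [exact: ltnW | by rewrite pi -lt0n |].
      move=> j ji; rewrite pj ?Hz //; first exact: ltn_trans ji _.
      * by rewrite neq_ltn ji.
      * by rewrite neq_ltn (ltn_trans ji).
    rewrite fp; apply: functional_extensionality => j.
    case: (eqVneq j i.+1) => [->|b]; first by rewrite upd_eq pi1 subnK.
    rewrite upd_ne //; case: (eqVneq j i) => [->|a]; first by rewrite upd_eq hi.
    by rewrite upd_ne // pj.
- move=> g gg /andP[/andP[/eqP HW /(sgebP m0 gg) [j [Hm Hz]]] H1].
  have [gb gz] := gg.
  have gj : g j = m.
    apply/eqP; rewrite eqn_leq Hm andbT leqNgt; apply/negP => c.
    by move/negP: H1; apply; apply/(sgebP m1 gg); exists j.
  have jK : j < K by rewrite ltnNge; apply/negP => /gz E; rewrite E in gj; lia.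
  have j1K : j.+1 < K.
    have := wbound HW jK; rewrite gj /K => E; nia.
  have gj0 : g j != 0 by rewrite gj -lt0n.
  rewrite (fzE jK gj0 Hz).
  set u := upd g j 0; set q := upd u j.+1 (g j.+1 + m).
  have ne : j.+1 != j by rewrite neq_ltn ltnSn orbT.
  have qj : q j = 0 by rewrite /q upd_ne 1?eq_sym // /u upd_eq.
  have qj1 : q j.+1 = g j.+1 + m by rewrite /q upd_eq.
  have qk : forall k, k != j -> k != j.+1 -> q k = g k.
    by move=> k a b; rewrite /q /u !upd_ne.
  have gq : good K q.
    split=> k.
    - case: (eqVneq k j) => [->|a]; first by rewrite qj.
      case: (eqVneq k j.+1) => [->|b]; last by rewrite qk.
      by rewrite qj1 /K leq_add2r (wb_le _ gg HW).
    - move=> Kk; rewrite qk ?gz //; apply/eqP => E; rewrite E in Kk; lia.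
  have q0 : q 0 = 0.
    case: (eqVneq j 0) => [E|a]; first by rewrite -{1}E qj.
    by rewrite qk ?Hz ?lt0n // eq_sym.
  split=> //.
  + have -> : (m <= q 0) = false by rewrite q0; lia.
    rewrite andbT; apply/andP; split.
      have E1 := W_upd g 0 jK.
      have E2 := W_upd u (g j.+1 + m) j1K.
      have uj : u j.+1 = g j.+1 by rewrite /u upd_ne.
      rewrite uj HW gj in E1 E2 *; rewrite -/q in E2; rewrite -/u in E1.
      have HK : K = n + m by [].
      apply/eqP; move: (W K u) (W K q) (g j.+1) E1 E2 => a b x E1 E2.
      rewrite /K; nia.
    apply/(sgebP m0 gq); exists j.+1; split; first by rewrite qj1 leq_addl.
    move=> k; rewrite ltnS leq_eqVlt => /orP[/eqP ->|kj]; first by rewrite qj.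
    rewrite qk ?Hz //; first by rewrite neq_ltn kj.
    by rewrite neq_ltn (ltn_trans kj).
  + have fq : fz K q = j.+1.
      apply: fzE => //; first by rewrite qj1; lia.
      move=> k; rewrite ltnS leq_eqVlt => /orP[/eqP ->|kj]; first by rewrite qj.
      rewrite qk ?Hz //; first by rewrite neq_ltn kj.
      by rewrite neq_ltn (ltn_trans kj).
    rewrite fq /=; apply: functional_extensionality => k.
    case: (eqVneq k j) => [->|a]; first by rewrite upd_eq gj.
    rewrite upd_ne //; case: (eqVneq k j.+1) => [->|b]; first by rewrite upd_eq qj1 addnK.
    by rewrite upd_ne // qk.
Qed.

End Comb4.
Section Comb5.
Local Open Scope nat_scope.

Lemma comb_rec m n : 0 < m -> a_m m (n + m) + a_m m.+1 n = npart n + a_m m n.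
Proof.
move=> m0.
have nK : n <= n + m := leq_addr _ _.
rewrite (am_CA m0 (leqnn (n + m))) (am_CA (isT : 0 < m.+1) nK) (npart_CP nK) (am_CA m0 nK).
have S1 := card_split
  (fun f : {ffun 'I_(n + m) -> 'I_(n + m).+1} => (W (n + m) (fn f) == n + m) && sgeb (n + m) m (fn f))
  (fun f => m <= fn f 0).
have S2 := card_split
  (fun f : {ffun 'I_(n + m) -> 'I_(n + m).+1} => (W (n + m) (fn f) == n) && sgeb (n + m) m (fn f))
  (fun f => sgeb (n + m) m.+1 (fn f)).
rewrite /= in S1 S2.
rewrite bij1 // bij2 // in S1.
have E : #|[set x : {ffun 'I_(n + m) -> 'I_(n + m).+1} |
           (W (n + m) (fn x) == n) && sgeb (n + m) m (fn x) && sgeb (n + m) m.+1 (fn x)]|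
         = CA (n + m) n m.+1.
  apply: eq_card => f; rewrite !inE -andbA; congr (_ && _).
  have gf := fn_good f.
  apply/andP/idP => [[]//|H]; split=> //.
  move/(sgebP (isT : 0 < m.+1) gf): H => [i [H1 H2]].
  by apply/(sgebP m0 gf); exists i; split=> //; exact: ltnW.
rewrite E in S2.
rewrite /CA S1 S2 -/(CA (n + m) n m.+1) -addnA [X in _ + X = _]addnC.
congr (_ + (_ + _)); by apply: eq_card => x; rewrite !inE.
Qed.

Lemma comb_base n : 0 < n -> a_m 1 n = npart n.
Proof.
move=> n0; by rewrite (am_CA (isT : 0 < 1) (leqnn n)) (npart_CP (leqnn n)) CA1.
Qed.

End Comb5.

Lemma lc_ext D (P : {poly int}) n K : (size P <= K)%N ->
  laurent_coef D P n = \sum_(j < K) P`_j * pZ (n + D%:Z - j%:Z).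
Proof.
move=> HK; rewrite /laurent_coef.
rewrite (@big_ord_widen _ _ _ (size P) K (fun j => P`_j * pZ (n + D%:Z - j%:Z))) //.
rewrite [LHS]big_mkcond /=; apply: eq_bigr => j _; case: ifP => // /negbT.
by rewrite -leqNgt => Hj; rewrite nth_default // mul0r.
Qed.

Lemma lc_shift D k (P : {poly int}) n :
  laurent_coef (D + k) ('X^k * P) n = laurent_coef D P n.
Proof.
have Hs : (size ('X^k * P)%R <= k + size P)%N.
  have := @size_polyMleq _ 'X^k P; rewrite size_polyXn /=.
  by move/leq_trans; apply; lia.
rewrite (lc_ext _ _ Hs) -(big_mkord xpredT (fun j => ('X^k * P)`_j * pZ (n + (D + k)%:Z - j%:Z))).
rewrite (big_cat_nat (leq0n k) (leq_addr (size P) k)) /=.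
rewrite [X in X + _]big_nat_cond big1 ?add0r; last first.
  by move=> i /andP[/andP[_ Hi] _]; rewrite coefXnM Hi mul0r.
rewrite (@big_addn _ _ _ 0 (k + size P) k xpredT (fun i => ('X^k * P)`_i * pZ (n + (D + k)%:Z - i%:Z))).
rewrite addKn big_mkord /laurent_coef; apply: eq_bigr => i _.
rewrite coefXnM ltnNge leq_addl /= addnK; congr (_ * pZ _).
lia.
Qed.

Lemma lc_X D n : laurent_coef D ('X^D) n = pZ n.
Proof.
have := lc_shift 0 D 1 n; rewrite mulr1 add0n => ->.
rewrite /laurent_coef size_poly1 big_ord1 coefC /= mul1r; congr pZ; lia.
Qed.

Lemma lc_shiftn D k (P : {poly int}) n :
  laurent_coef (D + k) P n = laurent_coef D P (n + k%:Z).
Proof.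
apply: eq_bigr => j _; congr (_ * pZ _); lia.
Qed.

Lemma lc_add D (P Q : {poly int}) n :
  laurent_coef D (P + Q) n = laurent_coef D P n + laurent_coef D Q n.
Proof.
have HK : (size (P + Q)%R <= size P + size Q)%N.
  apply: leq_trans (size_polyD _ _) _; rewrite geq_max leq_addr leq_addl //.
rewrite (lc_ext _ _ HK) (lc_ext _ _ (leq_addr (size Q) (size P))).
rewrite (lc_ext _ _ (leq_addl (size P) (size Q))) -big_split /=.
by apply: eq_bigr => j _; rewrite coefD mulrDl.
Qed.

Lemma lc_opp D (P : {poly int}) n :
  laurent_coef D (- P) n = - laurent_coef D P n.
Proof.
rewrite /laurent_coef size_polyN -sumrN; apply: eq_bigr => j _.
by rewrite coefN mulNr.
Qed.

Lemma qF_neq0 : qF != 0.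
Proof. by rewrite /qF /toF tofrac_eq0 polyX_eq0. Qed.

Lemma qFX_neq0 k : qF ^+ k != 0.
Proof. exact: (expf_neq0 k qF_neq0). Qed.

Lemma cross (F : fieldType) (a b x y : F) :
  x != 0 -> y != 0 -> a / x = b / y -> a * y = b * x.
Proof. by move=> xn0 yn0 E; rewrite -{1}(divfK xn0 a) E mulrAC divfK. Qed.

Lemma lc_uniq D D' (P P' : {poly int}) n :
  toF P / qF ^+ D = toF P' / qF ^+ D' -> laurent_coef D P n = laurent_coef D' P' n.
Proof.
move=> E.
have xn0 := qFX_neq0 D.
have yn0 := qFX_neq0 D'.
have E2 := cross xn0 yn0 E.
have E3 : 'X^D' * P = 'X^D * P'.
  apply/eqP; rewrite -(tofrac_eq (R := {poly int})); apply/eqP.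
  rewrite !tofracM !tofracXn.
  rewrite [LHS]mulrC [RHS]mulrC.
  exact: E2.
by rewrite -(lc_shift D D' P n) E3 addnC lc_shift.
Qed.
Lemma F_rec k : F_m k.+2 = 1 - (qF ^- k.+1 - 1) * F_m k.+1.
Proof.
pose Pi j := \prod_(0 <= i < j) (qF ^- (k.+1 - 1 - i) - 1).
have E1 : F_m k.+1 = \sum_(0 <= j < k.+1) (-1) ^+ j * Pi j.
  rewrite [RHS](big_nat_recl _ _ _ (leq0n k)) expr0 mul1r /Pi (big_geq (leqnn 0)).
  rewrite /F_m big_add1 /=.
  reflexivity.
have E2 : F_m k.+2 = 1 + \sum_(0 <= j < k.+1) (-1) ^+ j.+1 * ((qF ^- k.+1 - 1) * Pi j).
  rewrite /F_m big_add1 /=; congr (1 + _); apply: eq_bigr => j _.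
  rewrite (big_nat_recl _ _ _ (leq0n j)); congr (_ * (_ * _)).
  rewrite /Pi; apply: eq_bigr => i _; congr (qF ^- _ - 1); lia.
rewrite E2 E1 mulr_sumr -sumrN; congr (1 + _); apply: eq_bigr => j _.
by rewrite exprS mulN1r mulNr mulrCA.
Qed.
Lemma alg (F : fieldType) (p x y : F) : x != 0 -> y != 0 ->
  1 - (y^-1 - 1) * (p / x) = (x * y + y * p - p) / (x * y).
Proof. move=> xn0 yn0; field; exact/andP. Qed.

Lemma rep_step k D P : F_m k.+1 = toF P / qF ^+ D ->
  F_m k.+2 = toF ('X^(D + k.+1) + 'X^(k.+1) * P - P) / qF ^+ (D + k.+1).
Proof.
move=> E; rewrite F_rec E.
have -> : toF ('X^(D + k.+1) + 'X^(k.+1) * P - P) = qF ^+ D * qF ^+ k.+1 + qF ^+ k.+1 * toF P - toF P.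
  by rewrite /toF /qF tofracB tofracD tofracM !tofracXn exprD.
rewrite exprD; exact: alg (qFX_neq0 D) (qFX_neq0 k.+1).
Qed.

Lemma main k : exists D P, F_m k.+1 = toF P / qF ^+ D /\
   forall n : int, 1 <= n -> laurent_coef D P n = (a_m k.+1 `|n|%N)%:Z.
Proof.
elim: k => [|k [D [P [E H]]]].
  exists 0%N, 1; split.
    by rewrite /F_m (big_geq (leqnn 1)) addr0 expr0 divr1 /toF tofrac1.
  case=> [n|n] Hn; last by lia.
  have n0 : (0 < n)%N by lia.
  have := lc_X 0 n; rewrite expr0 => ->.
  by rewrite /pZ /= comb_base.
exists (D + k.+1)%N, ('X^(D + k.+1) + 'X^(k.+1) * P - P); split.
  exact: rep_step E.
case=> [n|n] Hn; last by lia.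
rewrite lc_add lc_opp lc_add lc_X lc_shift lc_shiftn H // H; last by lia.
rewrite -PoszD /= /pZ /=.
have := comb_rec n (isT : (0 < k.+1)%N); move/(congr1 Posz); rewrite !PoszD.
lia.
Qed.

Unset Implicit Arguments.
Set Strict Implicit.

Theorem theorem3p3 (m : nat) (hm : (1 <= m)%N) :
  (exists (D : nat) (P : {poly int}), F_m m = toF P / qF ^+ D) /\
  (forall (D : nat) (P : {poly int}), F_m m = toF P / qF ^+ D ->
     forall n : int, lhs_coef m n = laurent_coef D P n - Dm_coef D P n).
Proof.
case: m hm => [//|k] _.
have [D0 [P0 [E0 H0]]] := main k.
split; first by exists D0, P0.
move=> D P E n.
have HL : laurent_coef D P n = laurent_coef D0 P0 n.
  apply: lc_uniq; rewrite -E; exact: E0.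
rewrite /lhs_coef /Dm_coef HL.
case: (lerP 1 n) => Hn.
  have -> : (n <= 0) = false by lia.
  by rewrite H0 // subr0.
have -> : (n <= 0) = true by lia.
by rewrite subrr.
Qed.
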